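(* For every qutrit state $\rho$ (density operator on $\mathbb{C}^3$), $C_{\mathcal{F}}(\rho)=\overline{C}_{\mathcal{R}}(\rho)$.
   Context: Fix the computational basis $\{|i\rangle\}_{i=0}^{d-1}$ of $\mathbb{C}^d$ (here $d=3$) as the incoherent basis; $\mathcal{I}$ denotes the set of density operators diagonal in this basis. Let $|\phi^+\rangle=\frac{1}{\sqrt d}\sum_i|i\rangle$ and $\mathcal{U}_d$ the set of diagonal unitaries. The quantum coherence fraction is $C_{\mathcal{F}}(\rho)=\max_{U\in\mathcal{U}_d}\langle\phi^+|U^\dagger\rho U|\phi^+\rangle$. The robustness of coherence is $C_{\mathcal{R}}(\rho)=\min\{s\ge0: \exists\text{ density operator }\tau,\ (\rho+s\tau)/(1+s)\in\mathcal{I}\}$, and $\overline{C}_{\mathcal{R}}(\rho)=(1+C_{\mathcal{R}}(\rho))/d$. *)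

(* Defs.v *)
From HB Require Import structures.
From mathcomp Require Import all_boot all_order all_algebra.
From mathcomp Require Import complex.
From mathcomp Require Import reals.
Set Implicit Arguments. Unset Strict Implicit. Unset Printing Implicit Defensive.
Import Order.TTheory GRing.Theory Num.Theory.
Local Open Scope ring_scope.

Section Coherence.
Variable R : realType.
Local Notation C := (R[i]).
Variable d : nat.

Definition adj (m n : nat) (A : 'M[C]_(m, n)) : 'M[C]_(n, m) :=
  (map_mx Num.conj A)^T.

Definition density (rho : 'M[C]_d) : Prop :=
  adj rho = rho /\
  (forall v : 'cV[C]_d, 0 <= (adj v *m rho *m v) 0 0) /\
  \tr rho = 1.

Definition incoherent (rho : 'M[C]_d) : Prop :=
  density rho /\ is_diag_mx rho.

Definition diag_unitary (U : 'M[C]_d) : Prop :=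
  is_diag_mx U /\ adj U *m U = 1%:M.

Definition phi_plus : 'cV[C]_d := \col_(i < d) (sqrtC (d%:R))^-1.

Definition fidelity_val (rho U : 'M[C]_d) : C :=
  (adj phi_plus *m (adj U *m rho *m U) *m phi_plus) 0 0.

Definition is_coherence_fraction (rho : 'M[C]_d) (f : C) : Prop :=
  (exists U, diag_unitary U /\ fidelity_val rho U = f) /\
  (forall U, diag_unitary U -> fidelity_val rho U <= f).

Definition robustness_feasible (rho : 'M[C]_d) (s : C) : Prop :=
  0 <= s /\ exists tau, density tau /\ incoherent ((1 + s)^-1 *: (rho + s *: tau)).

Definition is_robustness (rho : 'M[C]_d) (s : C) : Prop :=
  robustness_feasible rho s /\
  (forall s', robustness_feasible rho s' -> s <= s').

End Coherence.

(* Main.v *)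
Require Import Defs.
From HB Require Import structures.
From mathcomp Require Import all_boot all_order all_algebra.
From mathcomp Require Import complex.
From mathcomp Require Import reals.
From mathcomp Require Import ring lra.
From mathcomp Require Import boolp classical_sets topology normedtype derive realfun.
Import Order.TTheory GRing.Theory Num.Theory.
Import numFieldNormedType.Exports.
Set Implicit Arguments. Unset Strict Implicit.
Local Open Scope ring_scope.

Section S.
Variable R : rcfType.
Local Notation C := (R[i]).
Local Notation Rp := (@complex.Re R).
Local Notation Ip := (@complex.Im R).


Definition unitc (z : C) := z * z^* = 1.

Definition Lf (p q r x0 x1 x2 : C) : C :=
  (p + r) * x0^* * x0 + (p^* + q) * x1^* * x1 + (r^* + q^*) * x2^* * x2
  - (x0^* * p * x1 + x1^* * p^* * x0 + x0^* * r * x2 + x2^* * r^* * x0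
     + x1^* * q * x2 + x2^* * q^* * x1).

Lemma conjc_real_eq (a b : R) : ((a +i* b)%C : C)^* = (a +i* (- b))%C.
Proof. by []. Qed.

Lemma real_of_test (c : C) : (forall y, unitc y -> 0 <= c + c^* - y^* * c - y * c^*) -> c^* = c.
Proof.
case: c => c1 c2 H.
have [h0|hn] := eqVneq (c1 ^+ 2 + c2 ^+ 2) 0.
  have hc2 : c2 = 0 by nra.
  by rewrite hc2 conjc_real_eq oppr0.
set N := Num.sqrt (c1 ^+ 2 + c2 ^+ 2).
have hpos : 0 < c1 ^+ 2 + c2 ^+ 2 by rewrite lt_def hn /=; nra.
have hN : 0 < N by rewrite sqrtr_gt0.
have hN2 : N ^+ 2 = c1 ^+ 2 + c2 ^+ 2 by rewrite sqr_sqrtr // ltW.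
have := H ((c1 / N) +i* (c2 / N))%C.
have hu : unitc ((c1 / N) +i* (c2 / N))%C.
  rewrite /unitc conjc_real_eq; simpc.
  rewrite -[1 : C]/(1 +i* 0)%C; congr (_ +i* _)%C; last by ring.
  have hN0 : N != 0 by rewrite gt_eqF.
  rewrite -!expr2 !expr_div_n -mulrDl -hN2 divff // expf_neq0 //.
move/(_ hu); rewrite !conjc_real_eq; simpc.
move=> /andP [_ H2].
have hN0 : N != 0 by rewrite gt_eqF.
have hS : c2 / N * c2 + c1 / N * c1 = N.
  by rewrite mulrAC [c1 / N * c1]mulrAC -mulrDl -!expr2 addrC -hN2 expr2 mulfK.
have H3 : 0 <= c1 + c1 - (c2 / N * c2 + c1 / N * c1) - (c2 / N * c2 + c1 / N * c1) by lra.
rewrite hS in H3.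
have hc2 : c2 = 0 by nra.
by rewrite hc2 oppr0.
Qed.
Lemma lim0_ge0 (a b c : R) : (forall e : R, 0 < e -> 0 <= a + e * b + e ^+ 2 * c) -> 0 <= a.
Proof.
move=> H; rewrite leNgt; apply/negP => ha.
set k := `|b| + `|c| + 1.
have hk : 0 < k by rewrite /k ltr_wpDl // addr_ge0.
set e := - a / (- a + k).
have hak : 0 < - a + k by rewrite addr_gt0 // oppr_gt0.
have he : 0 < e by rewrite /e divr_gt0 // oppr_gt0.
have hE : e * (- a) + e * k = - a.
  by rewrite -mulrDr /e mulfVK // gt_eqF.
have hea : 0 < e * (- a) by rewrite mulr_gt0 // oppr_gt0.
have := H e he.
have hek : 0 < e * k by rewrite mulr_gt0.
have he1 : e <= 1.
  have : e * (- a) < 1 * (- a) by rewrite mul1r; lra.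
  by rewrite ltr_pM2r ?oppr_gt0 // => /ltW.
have h1 : e * b <= e * `|b| by rewrite ler_pM2l // ler_norm.
have h2 : e ^+ 2 * c <= e * `|c|.
  apply: (le_trans (_ : _ <= e ^+ 2 * `|c|)); first by rewrite ler_pM2l ?exprn_gt0 // ler_norm.
  by rewrite expr2 -mulrA ler_pM2l // ler_piMl // normr_ge0.
have hk' : e * k = e * `|b| + e * `|c| + e by rewrite /k; ring.
lra.
Qed.

Lemma conjR (e : R) : ((e%:C)%C : C)^* = (e%:C)%C.
Proof. by rewrite /real_complex_def conjc_real_eq oppr0. Qed.
Lemma Re_add (x y : C) : Rp (x + y) = Rp x + Rp y.
Proof. by case: x => ? ?; case: y => ? ?. Qed.
Lemma Re_scal (e : R) (x : C) : Rp ((e%:C)%C * x) = e * Rp x.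
Proof. by case: x => a b /=; rewrite mul0r subr0. Qed.
Lemma Re_lin (A T Y : C) (e : R) :
  Rp (A + (e%:C)%C * T + ((e ^+ 2)%:C)%C * Y) = Rp A + e * Rp T + e ^+ 2 * Rp Y.
Proof. by case: A => ? ?; case: T => ? ?; case: Y => ? ? /=; ring. Qed.
Lemma ge0_C (x : C) : x^* = x -> 0 <= Rp x -> 0 <= x.
Proof.
case: x => a b; rewrite conjc_real_eq => -[hb] ha.
have hb0 : b = 0 by lra.
by rewrite lecE /= ha andbT hb0.
Qed.

Section LL.
Variables (p q r : C).
Hypothesis h1 : (p + r)^* = p + r.
Hypothesis h2 : (p^* + q)^* = p^* + q.

Lemma hr : r^* = p + r - p^*.
Proof. by move: h1; rewrite rmorphD /= => <-; rewrite addrC addKr. Qed.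
Lemma hq : q^* = p^* + q - p.
Proof. by move: h2; rewrite rmorphD /= conjCK => <-; rewrite addrC addKr. Qed.

Lemma L_shift x0 x1 x2 c : Lf p q r (x0 + c) (x1 + c) (x2 + c) = Lf p q r x0 x1 x2.
Proof. rewrite /Lf !rmorphD /= hr hq; ring. Qed.

Lemma L_scale x0 x1 x2 l : Lf p q r (l * x0) (l * x1) (l * x2) = l^* * l * Lf p q r x0 x1 x2.
Proof. rewrite /Lf !rmorphM /=; ring. Qed.

Lemma L_herm x0 x1 x2 : (Lf p q r x0 x1 x2)^* = Lf p q r x0 x1 x2.
Proof. rewrite /Lf !(rmorphB, rmorphD, rmorphM) /= !conjCK hr hq; ring. Qed.

Lemma L_zero : Lf p q r 0 0 0 = 0.
Proof. rewrite /Lf rmorph0; ring. Qed.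

Hypothesis H : forall v0 v1 v2, unitc v0 -> unitc v1 -> unitc v2 -> 0 <= Lf p q r v0 v1 v2.

Lemma circum (B D : C) : B^* * D - B * D^* != 0 ->
  (B - B * D * (B^* - D^*) / (B^* * D - B * D^*)) * (B - B * D * (B^* - D^*) / (B^* * D - B * D^*))^*
  = B * D * (B^* - D^*) / (B^* * D - B * D^*) * (B * D * (B^* - D^*) / (B^* * D - B * D^*))^* /\
  (D - B * D * (B^* - D^*) / (B^* * D - B * D^*)) * (D - B * D * (B^* - D^*) / (B^* * D - B * D^*))^*
  = B * D * (B^* - D^*) / (B^* * D - B * D^*) * (B * D * (B^* - D^*) / (B^* * D - B * D^*))^*.
Proof.
move=> hK.
have hKc : B * D^* - B^* * D != 0 by rewrite -oppr_eq0 opprB.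
rewrite !(rmorphB, rmorphM, fmorphV) /= !conjCK.
split; field; by apply/andP; split; [exact: hKc | exact: hK].
Qed.

Lemma L_noncol x0 x1 x2 : (x1 - x0)^* * (x2 - x0) - (x1 - x0) * (x2 - x0)^* != 0 ->
  0 <= Lf p q r x0 x1 x2.
Proof.
have [B ->] : exists B, x1 = x0 + B by exists (x1 - x0); rewrite addrC subrK.
have [D ->] : exists D, x2 = x0 + D by exists (x2 - x0); rewrite addrC subrK.
rewrite !(addrC x0) !addrK => hK.
have [hz1 hz2] := @circum B D hK.
move: hz1 hz2; set z := B * D * (B^* - D^*) / (B^* * D - B * D^*) => hz1 hz2.
have -> : Lf p q r x0 (B + x0) (D + x0) = Lf p q r (-z) (B - z) (D - z).
  rewrite -[LHS](L_shift _ _ _ (-(x0 + z))); congr Lf; ring.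
have hz0 : z != 0.
  apply/negP => /eqP hz; move: hz1; rewrite hz subr0 mul0r => /eqP.
  rewrite mul_conjC_eq0 => /eqP hB; move: hK; rewrite hB rmorph0; rewrite !(mul0r, mulr0) subrr eqxx //.
set l := `|z|.
have hl : l^* = l by rewrite conj_normC.
have hl0 : l != 0 by rewrite normr_eq0.
have e : forall a, a = l * (a / l) by move=> a; rewrite mulrC divfK.
have hu : forall a, a * a^* = z * z^* -> unitc (a / l).
  move=> a ha; rewrite /unitc rmorphM fmorphV /= hl mulrACA -invfM ha -normCK expr2 divff //.
  by rewrite mulf_neq0.
have -> : Lf p q r (-z) (B - z) (D - z) = Lf p q r (l * (-z / l)) (l * ((B - z) / l)) (l * ((D - z) / l)).
  by rewrite -!e.
rewrite L_scale.
apply: mulr_ge0; first by rewrite hl -expr2 normCK mul_conjC_ge0.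
apply: H; apply: hu => //.
by rewrite rmorphN mulrNN.
Qed.
Lemma L_perturb x0 x1 x2 y0 y1 y2 :
  (forall e : R, 0 < e ->
     0 <= Lf p q r (x0 + (e%:C)%C * y0) (x1 + (e%:C)%C * y1) (x2 + (e%:C)%C * y2)) ->
  0 <= Lf p q r x0 x1 x2.
Proof.
move=> He.
set T := Lf p q r (x0 + y0) (x1 + y1) (x2 + y2) - Lf p q r x0 x1 x2 - Lf p q r y0 y1 y2.
have iden : forall e : R,
  Lf p q r (x0 + (e%:C)%C * y0) (x1 + (e%:C)%C * y1) (x2 + (e%:C)%C * y2) =
  Lf p q r x0 x1 x2 + (e%:C)%C * T + ((e ^+ 2)%:C)%C * Lf p q r y0 y1 y2.
  move=> e.
  have hE : ((e ^+ 2)%:C)%C = ((e%:C)%C ^+ 2 : C).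
    rewrite expr2 /real_complex_def /=; congr (_ +i* _)%C; ring.
  rewrite hE /T /Lf !(rmorphD, rmorphM) /= conjR; ring.
apply: ge0_C; first exact: L_herm.
apply: (@lim0_ge0 _ (Rp T) (Rp (Lf p q r y0 y1 y2))) => e he.
move: (He e he); rewrite iden lecE => /andP [_ h].
by move: h; rewrite Re_lin.
Qed.
Lemma L_all x0 x1 x2 : 0 <= Lf p q r x0 x1 x2.
Proof.
have [B ->] : exists B, x1 = x0 + B by exists (x1 - x0); rewrite addrC subrK.
have [D ->] : exists D, x2 = x0 + D by exists (x2 - x0); rewrite addrC subrK.
have hB0 : forall y, x0 + y - x0 = y by move=> y; rewrite addrC addKr.
have [hK|hK] := eqVneq (B^* * D - B * D^*) 0; last by apply: L_noncol; rewrite !hB0.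
have ni : ('i : C) != 0 by exact: neq0Ci.
have n2 : (2%:R : C) != 0 by rewrite pnatr_eq0.
have [hB|hB] := eqVneq B 0; last first.
  apply: (@L_perturb _ _ _ 0 0 ('i * B)) => e he.
  rewrite !mulr0 !addr0; apply: L_noncol.
  match goal with |- is_true (?X != _) => have -> : X =
     (B^* * D - B * D^*) + 2%:R * (e%:C)%C * 'i * (B * B^*) end.
    by rewrite !(rmorphB, rmorphD, rmorphM) /= conjR conjCi; ring.
  rewrite hK add0r !mulf_neq0 // ?conjC_eq0 //.
  by apply/eqP => -[] /eqP; rewrite gt_eqF.
have [hD|hD] := eqVneq D 0; last first.
  apply: (@L_perturb _ _ _ 0 ('i * D) 0) => e he.
  rewrite !mulr0 !addr0; apply: L_noncol.
  match goal with |- is_true (?X != _) => have -> : X =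
     (B^* * D - B * D^*) - 2%:R * (e%:C)%C * 'i * (D * D^*) end.
    by rewrite !(rmorphB, rmorphD, rmorphM) /= conjR conjCi; ring.
  rewrite hK add0r oppr_eq0 !mulf_neq0 // ?conjC_eq0 //.
  by apply/eqP => -[] /eqP; rewrite gt_eqF.
rewrite hB hD addr0.
by rewrite -[x0]add0r L_shift L_zero.
Qed.
End LL.
Lemma unit1 : unitc 1.
Proof. by rewrite /unitc rmorph1 mulr1. Qed.

Lemma Lap (p q r : C) :
  (forall v0 v1 v2, unitc v0 -> unitc v1 -> unitc v2 -> 0 <= Lf p q r v0 v1 v2) ->
  forall x0 x1 x2, 0 <= Lf p q r x0 x1 x2.
Proof.
move=> H.
have h1 : (p + r)^* = p + r.
  apply: real_of_test => y hy.
  have E : Lf p q r y 1 1 - ((p + r) + (p + r)^* - y^* * (p + r) - y * (p + r)^*) =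
      (p + r) * (y^* * y - 1) by rewrite /Lf !rmorphD rmorph1 /=; ring.
  move/eqP: E; rewrite [y^* * y]mulrC hy subrr mulr0 subr_eq0 => /eqP <-.
  exact: H hy unit1 unit1.
have h2 : (p^* + q)^* = p^* + q.
  apply: real_of_test => y hy.
  have E : Lf p q r 1 y 1 - ((p^* + q) + (p^* + q)^* - y^* * (p^* + q) - y * (p^* + q)^*) =
      (p^* + q) * (y^* * y - 1).
    by rewrite /Lf !rmorphD rmorph1 /= conjCK; ring.
  move/eqP: E; rewrite [y^* * y]mulrC hy subrr mulr0 subr_eq0 => /eqP <-.
  exact: H unit1 hy unit1.
exact: L_all.
Qed.

Definition Qf (d0 d1 d2 A B Cc v0 v1 v2 : C) : C :=
  d0 * v0^* * v0 + d1 * v1^* * v1 + d2 * v2^* * v2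
  + v0^* * A * v1 + v1^* * A^* * v0 + v0^* * B * v2 + v2^* * B^* * v0
  + v1^* * Cc * v2 + v2^* * Cc^* * v1.

Lemma unit_inv (u : C) : unitc u -> u^* = u^-1 /\ u != 0.
Proof.
rewrite /unitc => hu.
have u0 : u != 0 by apply/eqP => h; move: hu; rewrite h mul0r => /eqP; rewrite eq_sym oner_eq0.
by split => //; rewrite -[u^-1]mulr1 -hu mulKf.
Qed.

Lemma unitM (u v : C) : unitc u -> unitc v -> unitc (u * v).
Proof. by rewrite /unitc rmorphM /= mulrACA => -> ->; rewrite mulr1. Qed.

Lemma Dual (d0 d1 d2 A B Cc u0 u1 u2 : C) :
  d0^* = d0 -> d1^* = d1 -> d2^* = d2 ->
  unitc u0 -> unitc u1 -> unitc u2 ->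
  (forall v0 v1 v2, unitc v0 -> unitc v1 -> unitc v2 ->
     Qf d0 d1 d2 A B Cc v0 v1 v2 <= Qf d0 d1 d2 A B Cc u0 u1 u2) ->
  forall w0 w1 w2,
  Qf d0 d1 d2 A B Cc w0 w1 w2 <=
    u0^* * (d0 * u0 + A * u1 + B * u2) * (w0^* * w0) +
    u1^* * (A^* * u0 + d1 * u1 + Cc * u2) * (w1^* * w1) +
    u2^* * (B^* * u0 + Cc^* * u1 + d2 * u2) * (w2^* * w2).
Proof.
move=> e0 e1 e2 hu0 hu1 hu2 Hopt.
set p := u0^* * A * u1; set r := u0^* * B * u2; set q := u1^* * Cc * u2.
have [i0 n0] := @unit_inv u0 hu0; have [i1 n1] := @unit_inv u1 hu1; have [i2 n2] := @unit_inv u2 hu2.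
have key : forall x0 x1 x2,
  u0^* * (d0 * u0 + A * u1 + B * u2) * (x0^* * x0) +
  u1^* * (A^* * u0 + d1 * u1 + Cc * u2) * (x1^* * x1) +
  u2^* * (B^* * u0 + Cc^* * u1 + d2 * u2) * (x2^* * x2)
  - Qf d0 d1 d2 A B Cc (u0 * x0) (u1 * x1) (u2 * x2) = Lf p q r x0 x1 x2.
  move=> x0 x1 x2; rewrite /Lf /Qf /p /q /r !rmorphM /= !conjCK i0 i1 i2.
  by field; rewrite n0 n1 n2.
have HL : forall v0 v1 v2, unitc v0 -> unitc v1 -> unitc v2 -> 0 <= Lf p q r v0 v1 v2.
  move=> v0 v1 v2 hv0 hv1 hv2; rewrite -key.
  rewrite [v0^* * v0]mulrC [v1^* * v1]mulrC [v2^* * v2]mulrC hv0 hv1 hv2 !mulr1.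
  rewrite subr_ge0.
  have -> : u0^* * (d0 * u0 + A * u1 + B * u2) + u1^* * (A^* * u0 + d1 * u1 + Cc * u2) +
     u2^* * (B^* * u0 + Cc^* * u1 + d2 * u2) = Qf d0 d1 d2 A B Cc u0 u1 u2 by rewrite /Qf; ring.
  by apply: Hopt; apply: unitM.
move=> w0 w1 w2.
have := @Lap p q r HL (u0^* * w0) (u1^* * w1) (u2^* * w2).
rewrite -key !rmorphM /= !conjCK.
have ew : forall (u w : C), unitc u -> u * (u^* * w) = w.
  by move=> u w hu; rewrite mulrA hu mul1r.
have ew2 : forall (u w : C), unitc u -> u * w^* * (u^* * w) = w^* * w.
  by move=> u w hu; rewrite mulrACA hu mul1r.
by rewrite !ew2 // !ew // subr_ge0.
Qed.
End S.
Arguments unitc {R}.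
Arguments Lf {R}.
Arguments Qf {R}.
Arguments unit1 {R}.
Arguments Dual {R}.

Section M.
Variable R : realType.
Local Notation C := (R[i]).
Local Notation Rp := (@complex.Re R).
Local Notation Ip := (@complex.Im R).

Lemma cM (f g : R -> R) : continuous f -> continuous g -> continuous (fun x => f x * g x).
Proof. move=> cf cg x; exact: (@continuousM R R f g x (cf x) (cg x)). Qed.
Lemma cD (f g : R -> R) : continuous f -> continuous g -> continuous (fun x => f x + g x).
Proof. move=> cf cg x; exact: (@continuousD R R^o R f g x (cf x) (cg x)). Qed.
Lemma cN (f : R -> R) : continuous f -> continuous (fun x => - f x).
Proof. move=> cf x; exact: (@continuousN R R^o R f x (cf x)). Qed.
Lemma cC (c : R) : continuous (fun _ : R => c).
Proof. move=> x; exact: cst_continuous. Qed.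
Lemma cI : continuous (fun x : R => x).
Proof. move=> x; exact: cvg_id. Qed.
Lemma cS (f : R -> R) : continuous f -> continuous (fun x => Num.sqrt (f x)).
Proof. move=> cf x; apply: (@continuous_comp _ _ _ f Num.sqrt x (cf x)). exact: sqrt_continuous. Qed.
Lemma cX (f : R -> R) : continuous f -> continuous (fun x => f x ^+ 2).
Proof. by move=> cf; rewrite (_ : (fun x => f x ^+ 2) = (fun x => f x * f x)); [apply: cM | apply/funext => x; rewrite expr2]. Qed.

Definition gK1 (b1 c1 c2 x w : R) := b1 + c1 * x + c2 * w.
Definition gK2 (b2 c1 c2 x w : R) := b2 + c2 * x - c1 * w.
Definition gg (a1 a2 b1 b2 c1 c2 x w : R) :=
  a1 * x - a2 * w + Num.sqrt (gK1 b1 c1 c2 x w ^+ 2 + gK2 b2 c1 c2 x w ^+ 2).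

Lemma gg_cont a1 a2 b1 b2 c1 c2 (s : R) :
  continuous (fun x => gg a1 a2 b1 b2 c1 c2 x (s * Num.sqrt (1 - x ^+ 2))).
Proof.
have hw : continuous (fun x : R => s * Num.sqrt (1 - x ^+ 2)).
  by apply: cM; [apply: cC | apply: cS; apply: cD; [apply: cC | apply: cN; apply: cX; apply: cI]].
rewrite /gg /gK1 /gK2.
apply: cD; first by apply: cD; [apply: cM; [apply: cC|apply: cI] | apply: cN; apply: cM; [apply: cC|exact: hw]].
apply: cS; apply: cD; apply: cX.
  by apply: cD; [apply: cD; [apply: cC | apply: cM; [apply: cC|apply: cI]] | apply: cM; [apply: cC|exact: hw]].
by apply: cD; [apply: cD; [apply: cC | apply: cM; [apply: cC|apply: cI]] | apply: cN; apply: cM; [apply: cC|exact: hw]].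
Qed.
Lemma circle_max (g : R -> R -> R) :
  (forall s : R, continuous (fun x => g x (s * Num.sqrt (1 - x ^+ 2)))) ->
  exists x0 w0, x0 ^+ 2 + w0 ^+ 2 = 1 /\
    forall x w, x ^+ 2 + w ^+ 2 = 1 -> g x w <= g x0 w0.
Proof.
move=> H.
have hab : (-1 : R) <= 1 by lra.
have [c1 hc1 m1] := EVT_max hab (continuous_subspaceT (H 1)).
have [c2 hc2 m2] := EVT_max hab (continuous_subspaceT (H (-1))).
have unitP : forall c s : R, c \in `[-1, 1] -> s ^+ 2 = 1 ->
    c ^+ 2 + (s * Num.sqrt (1 - c ^+ 2)) ^+ 2 = 1.
  move=> c s; rewrite in_itv /= => /andP [h1 h2] hs.
  rewrite exprMn hs mul1r sqr_sqrtr; first by ring.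
  rewrite subr_ge0; nra.
have cover : forall x w : R, x ^+ 2 + w ^+ 2 = 1 ->
    x \in `[-1, 1] /\ (w = 1 * Num.sqrt (1 - x ^+ 2) \/ w = -1 * Num.sqrt (1 - x ^+ 2)).
  move=> x w hxw; split.
    rewrite in_itv /=; apply/andP; split; nra.
  have -> : 1 - x ^+ 2 = w ^+ 2 by lra.
  rewrite sqrtr_sqr; case: (lerP 0 w) => hw.
    by left; rewrite mul1r ger0_norm.
  by right; rewrite ltr0_norm // mulN1r opprK.
case: (lerP (g c1 (1 * Num.sqrt (1 - c1 ^+ 2))) (g c2 (-1 * Num.sqrt (1 - c2 ^+ 2)))) => hc.
  exists c2, (-1 * Num.sqrt (1 - c2 ^+ 2)); split; first by apply: unitP => //; ring.
  move=> x w /cover [hx [->|->]]; last exact: m2.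
  exact: le_trans (m1 _ hx) hc.
exists c1, (1 * Num.sqrt (1 - c1 ^+ 2)); split; first by apply: unitP => //; ring.
move=> x w /cover [hx [->|->]]; first exact: m1.
exact: le_trans (m2 _ hx) (ltW hc).
Qed.

Lemma conjE (a b : R) : ((a +i* b)%C : C)^* = (a +i* (- b))%C.
Proof. by []. Qed.

Lemma unitc_coord (a b : R) : unitc ((a +i* b)%C : C) <-> a ^+ 2 + b ^+ 2 = 1.
Proof.
rewrite /unitc conjE; simpc; split.
  by move=> -[h _]; rewrite !expr2.
by move=> h; rewrite -[1 : C]/(1 +i* 0)%C; congr (_ +i* _)%C; [rewrite -!expr2 | ring].
Qed.

Lemma addJ (W : C) : W + W^* = ((2 * Rp W)%:C)%C.
Proof. by case: W => a b; rewrite conjE /real_complex_def; simpc; congr (_ +i* _)%C; rewrite /=; ring. Qed.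

Lemma cs_le (k1 k2 y1 y2 : R) : y1 ^+ 2 + y2 ^+ 2 = 1 ->
  k1 * y1 - k2 * y2 <= Num.sqrt (k1 ^+ 2 + k2 ^+ 2).
Proof.
move=> hy.
apply: (le_trans (ler_norm _)).
rewrite -sqrtr_sqr; apply: ler_wsqrtr.
have : (k1 ^+ 2 + k2 ^+ 2) * (y1 ^+ 2 + y2 ^+ 2) - (k1 * y1 - k2 * y2) ^+ 2 = (k1 * y2 + k2 * y1) ^+ 2 by ring.
rewrite hy mulr1 => E.
have : 0 <= (k1 * y2 + k2 * y1) ^+ 2 by apply: sqr_ge0.
rewrite -E subr_ge0 //.
Qed.

Lemma Qf_scale (d0 d1 d2 A B Cc v0 v1 v2 c : C) :
  Qf d0 d1 d2 A B Cc (c * v0) (c * v1) (c * v2) = c^* * c * Qf d0 d1 d2 A B Cc v0 v1 v2.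
Proof. rewrite /Qf !rmorphM /=; ring. Qed.

Lemma Qf_W (d0 d1 d2 A B Cc z y : C) :
  Qf d0 d1 d2 A B Cc 1 z y = d0 + d1 * (z^* * z) + d2 * (y^* * y) +
    ((A * z + B * y + Cc * z^* * y) + (A * z + B * y + Cc * z^* * y)^*).
Proof. rewrite /Qf !(rmorphD, rmorphM) rmorph1 /= conjCK; ring. Qed.

Lemma ReW (a1 a2 b1 b2 c1 c2 x w y1 y2 : R) :
  Rp ((a1 +i* a2)%C * (x +i* w)%C + (b1 +i* b2)%C * (y1 +i* y2)%C
      + (c1 +i* c2)%C * ((x +i* w)%C : C)^* * (y1 +i* y2)%C)
  = a1 * x - a2 * w + (gK1 b1 c1 c2 x w * y1 - gK2 b2 c1 c2 x w * y2).
Proof. rewrite conjE /gK1 /gK2 /=; ring. Qed.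

Lemma Max (d0 d1 d2 A B Cc : C) :
  exists u0 u1 u2, [/\ unitc u0, unitc u1, unitc u2 &
    forall v0 v1 v2, unitc v0 -> unitc v1 -> unitc v2 ->
      Qf d0 d1 d2 A B Cc v0 v1 v2 <= Qf d0 d1 d2 A B Cc u0 u1 u2].
Proof.
case: A => a1 a2; case: B => b1 b2; case: Cc => c1 c2.
have [x0 [w0 [hxw hmax]]] := @circle_max _ (@gg_cont a1 a2 b1 b2 c1 c2).
set K1 := gK1 b1 c1 c2 x0 w0; set K2 := gK2 b2 c1 c2 x0 w0.
set N := Num.sqrt (K1 ^+ 2 + K2 ^+ 2).
pose ys : C := if N == 0 then 1 else ((K1 / N) +i* (- (K2 / N)))%C.
have hN0 : 0 <= K1 ^+ 2 + K2 ^+ 2 by rewrite addr_ge0 // sqr_ge0.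
have hNs : N ^+ 2 = K1 ^+ 2 + K2 ^+ 2 by rewrite sqr_sqrtr.
have [ys1 [ys2 [eys hys heq]]] : exists ys1 ys2, [/\ ys = (ys1 +i* ys2)%C,
    ys1 ^+ 2 + ys2 ^+ 2 = 1 & K1 * ys1 - K2 * ys2 = N].
  rewrite /ys; case: eqP => hN.
    exists 1, 0; split => //; first by ring.
    have : K1 ^+ 2 + K2 ^+ 2 = 0 by rewrite -hNs hN expr0n.
    move=> h0; have hK1 : K1 = 0 by nra.
    have hK2 : K2 = 0 by nra.
    by rewrite hN hK1 hK2; ring.
  exists (K1 / N), (- (K2 / N)); split => //.
    by rewrite sqrrN !expr_div_n -mulrDl -hNs divff // expf_neq0 //; apply/eqP.
  rewrite mulrN opprK !mulrA -mulrDl -!expr2 -hNs expr2 mulfK //; apply/eqP => //.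
have key : forall x w y1 y2 : R, x ^+ 2 + w ^+ 2 = 1 -> y1 ^+ 2 + y2 ^+ 2 = 1 ->
   Rp ((a1 +i* a2)%C * (x +i* w)%C + (b1 +i* b2)%C * (y1 +i* y2)%C
      + (c1 +i* c2)%C * ((x +i* w)%C : C)^* * (y1 +i* y2)%C) <=
   Rp ((a1 +i* a2)%C * (x0 +i* w0)%C + (b1 +i* b2)%C * ys
      + (c1 +i* c2)%C * ((x0 +i* w0)%C : C)^* * ys).
  move=> x w y1 y2 hxw' hy.
  rewrite eys !ReW -/K1 -/K2 heq.
  apply: le_trans (hmax x w hxw').
  rewrite /gg lerD2l; exact: cs_le.
exists 1, (x0 +i* w0)%C, ys; split.
- exact: unit1.
- by apply/unitc_coord.
- by rewrite eys; apply/unitc_coord.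
move=> v0 v1 v2 hv0 hv1 hv2.
have hc : unitc v0^* by rewrite /unitc conjCK mulrC.
have hz := @unitM R _ _ hc hv1; have hy := @unitM R _ _ hc hv2.
have E := Qf_scale d0 d1 d2 (a1 +i* a2)%C (b1 +i* b2)%C (c1 +i* c2)%C v0 v1 v2 v0^*.
rewrite conjCK hv0 mul1r [v0^* * v0]mulrC hv0 in E.
rewrite -E.
have hu1 : unitc ((x0 +i* w0)%C : C) by apply/unitc_coord.
have hu2 : unitc ys by rewrite eys; apply/unitc_coord.
move: hz hy; case: (v0^* * v1) => x w; case: (v0^* * v2) => y1 y2 hz hy.
have ucz : forall z : C, unitc z -> z^* * z = 1 by move=> z; rewrite /unitc mulrC.
rewrite !Qf_W !ucz // lerD2l !addJ lecR ler_pM2l //.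
apply: key; exact/unitc_coord.
Qed.

End M.

Section G.
Variable R : realType.
Local Notation C := (R[i]).

Lemma sum3 (F : 'I_3 -> C) : \sum_(i < 3) F i = F 0 + F 1 + F 2.
Proof.
rewrite !big_ord_recl big_ord0 addr0 addrA.
by congr (F _ + F _ + F _); apply/val_inj.
Qed.

Lemma adjE m n (A : 'M[C]_(m, n)) i j : adj A i j = (A j i)^*.
Proof. by rewrite !mxE. Qed.

Definition herm (M : 'M[C]_3) := forall i j, M j i = (M i j)^*.

Lemma qf_sum (M : 'M[C]_3) (v : 'cV[C]_3) :
  (adj v *m M *m v) 0 0 = \sum_i \sum_j (v i 0)^* * M i j * v j 0.
Proof.
rewrite !mxE !sum3 !mxE !sum3 !adjE; ring.
Qed.

Lemma qfE (M : 'M[C]_3) (v : 'cV[C]_3) : herm M ->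
  (adj v *m M *m v) 0 0 =
  Qf (M 0 0) (M 1 1) (M 2 2) (M 0 1) (M 0 2) (M 1 2) (v 0 0) (v 1 0) (v 2 0).
Proof.
move=> hM; rewrite qf_sum !sum3 /Qf (hM 0 1) (hM 0 2) (hM 1 2); ring.
Qed.

Definition vec3 (x0 x1 x2 : C) : 'cV[C]_3 :=
  \col_(i < 3) (if i == 0 then x0 else if i == 1 then x1 else x2).
Definition row3 (x0 x1 x2 : C) : 'rV[C]_3 :=
  \row_(i < 3) (if i == 0 then x0 else if i == 1 then x1 else x2).

Lemma vec3E x0 x1 x2 : [/\ vec3 x0 x1 x2 0 0 = x0, vec3 x0 x1 x2 1 0 = x1 & vec3 x0 x1 x2 2 0 = x2].
Proof. by rewrite !mxE. Qed.
Lemma row3E x0 x1 x2 : [/\ row3 x0 x1 x2 0 0 = x0, row3 x0 x1 x2 0 1 = x1 & row3 x0 x1 x2 0 2 = x2].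
Proof. by rewrite !mxE. Qed.

Lemma diag_qf (e : 'rV[C]_3) (v : 'cV[C]_3) :
  (adj v *m diag_mx e *m v) 0 0 =
  e 0 0 * ((v 0 0)^* * v 0 0) + e 0 1 * ((v 1 0)^* * v 1 0) + e 0 2 * ((v 2 0)^* * v 2 0).
Proof. rewrite qf_sum !sum3 !mxE /= !mulr1n !mulr0n; ring. Qed.

Lemma fidE (M : 'M[C]_3) (e : 'rV[C]_3) : herm M ->
  fidelity_val M (diag_mx e) =
  3%:R^-1 * Qf (M 0 0) (M 1 1) (M 2 2) (M 0 1) (M 0 2) (M 1 2) (e 0 0) (e 0 1) (e 0 2).
Proof.
move=> hM.
set k : C := (sqrtC 3%:R)^-1.
have hk0 : 0 <= k by rewrite /k invr_ge0 sqrtC_ge0 ler0n.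
have hkk : k^* * k = 3%:R^-1 by rewrite geC0_conj // /k -expr2 exprVn sqrtCK.
rewrite /fidelity_val qf_sum !sum3 !mxE !sum3 !mxE !sum3 !mxE /= !mulr1n !mulr0n -/k.
rewrite -hkk /Qf (hM 0 1) (hM 0 2) (hM 1 2); ring.
Qed.
End G.

Section G2.
Variable R : realType.
Local Notation C := (R[i]).

Lemma ord3 (j : 'I_3) : j = 0 \/ j = 1 \/ j = 2.
Proof.
case: j => [[|[|[|n]]] h].
- by left; apply/val_inj.
- by right; left; apply/val_inj.
- by right; right; apply/val_inj.
- by [].
Qed.

Lemma adj_diag (e : 'rV[C]_3) : adj (diag_mx e) = diag_mx (map_mx Num.conj e).
Proof. by rewrite /adj map_diag_mx tr_diag_mx. Qed.

Lemma adjD (A B : 'M[C]_3) : adj (A + B) = adj A + adj B.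
Proof. by apply/matrixP => i j; rewrite !mxE rmorphD. Qed.
Lemma adjN (A : 'M[C]_3) : adj (- A) = - adj A.
Proof. by apply/matrixP => i j; rewrite !mxE rmorphN. Qed.
Lemma adjZ (c : C) (A : 'M[C]_3) : adj (c *: A) = c^* *: adj A.
Proof. by apply/matrixP => i j; rewrite !mxE rmorphM. Qed.

Lemma formD (A B : 'M[C]_3) (v : 'cV[C]_3) :
  (adj v *m (A + B) *m v) 0 0 = (adj v *m A *m v) 0 0 + (adj v *m B *m v) 0 0.
Proof. by rewrite mulmxDr mulmxDl mxE. Qed.
Lemma formN (A : 'M[C]_3) (v : 'cV[C]_3) :
  (adj v *m (- A) *m v) 0 0 = - (adj v *m A *m v) 0 0.
Proof. by rewrite mulmxN mulNmx mxE. Qed.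
Lemma formZ (c : C) (A : 'M[C]_3) (v : 'cV[C]_3) :
  (adj v *m (c *: A) *m v) 0 0 = c * (adj v *m A *m v) 0 0.
Proof. by rewrite -scalemxAr -scalemxAl mxE. Qed.

Lemma scale_diag (c : C) (e : 'rV[C]_3) : c *: diag_mx e = diag_mx (c *: e).
Proof. by apply/matrixP => i j; rewrite !mxE mulrnAr. Qed.

Lemma unitary_diag (e : 'rV[C]_3) :
  adj (diag_mx e) *m diag_mx e = 1%:M <-> [/\ unitc (e 0 0), unitc (e 0 1) & unitc (e 0 2)].
Proof.
rewrite adj_diag mulmx_diag; split.
  move=> h.
  have hi : forall i, (e 0 i)^* * e 0 i = 1.
    move=> i; move/matrixP: h => /(_ i i); rewrite !mxE eqxx !mulr1n.
    done.
  by split; rewrite /unitc mulrC hi.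
move=> [h0 h1 h2]; rewrite -diag_const_mx; congr diag_mx; apply/rowP => j; rewrite !mxE.
by case: (ord3 j) => [->|[->|->]]; rewrite mulrC.
Qed.

Lemma density_diag (e : 'rV[C]_3) : (forall i, 0 <= e 0 i) -> e 0 0 + e 0 1 + e 0 2 = 1 ->
  density (diag_mx e).
Proof.
move=> he hs; split; [|split].
- rewrite adj_diag; congr diag_mx; apply/matrixP => i j; rewrite !mxE (ord1 i) geC0_conj //.
- move=> v; rewrite diag_qf.
  by rewrite !addr_ge0 // mulr_ge0 // mulrC mul_conjC_ge0.
- by rewrite mxtrace_diag sum3.
Qed.
End G2.

Unset Implicit Arguments.
Set Strict Implicit.


Theorem theorem3 (R : realType) (rho : 'M[R[i]]_3) :
  density rho ->
  exists f s : R[i],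
    is_coherence_fraction rho f /\ is_robustness rho s /\ f = (1 + s) / 3%:R.
Proof.
move=> [hadj [hpsd htr]].
have hM : herm rho by move=> i j; rewrite -[in LHS]hadj adjE.
have hd : forall i, (rho i i)^* = rho i i by move=> i; rewrite -hM.
set A := rho 0 1; set B := rho 0 2; set Cc := rho 1 2.
set d0 := rho 0 0; set d1 := rho 1 1; set d2 := rho 2 2.
have Qnn : forall x0 x1 x2, 0 <= Qf d0 d1 d2 A B Cc x0 x1 x2.
  move=> x0 x1 x2; have := hpsd (vec3 x0 x1 x2); rewrite qfE //.
  by case: (vec3E x0 x1 x2) => -> -> ->.
have [u0 [u1 [u2 [hu0 hu1 hu2 hopt]]]] := @Max R d0 d1 d2 A B Cc.
pose s0 := u0^* * (d0 * u0 + A * u1 + B * u2).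
pose s1 := u1^* * (A^* * u0 + d1 * u1 + Cc * u2).
pose s2 := u2^* * (B^* * u0 + Cc^* * u1 + d2 * u2).
have hdual : forall w0 w1 w2, Qf d0 d1 d2 A B Cc w0 w1 w2 <=
    s0 * (w0^* * w0) + s1 * (w1^* * w1) + s2 * (w2^* * w2)
  := Dual d0 d1 d2 A B Cc u0 u1 u2 (hd 0) (hd 1) (hd 2) hu0 hu1 hu2 hopt.
set q := Qf d0 d1 d2 A B Cc u0 u1 u2.
have hsum : s0 + s1 + s2 = q by rewrite /s0 /s1 /s2 /q /Qf; ring.
have htr' : d0 + d1 + d2 = 1 by rewrite -htr /mxtrace sum3.
have E0 : Qf d0 d1 d2 A B Cc 1 0 0 = d0 by rewrite /Qf rmorph0 rmorph1; ring.
have E1 : Qf d0 d1 d2 A B Cc 0 1 0 = d1 by rewrite /Qf rmorph0 rmorph1; ring.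
have E2 : Qf d0 d1 d2 A B Cc 0 0 1 = d2 by rewrite /Qf rmorph0 rmorph1; ring.
have hs0 : d0 <= s0 by have := hdual 1 0 0; rewrite E0 rmorph0 rmorph1 !(mulr0, mul0r, mulr1, addr0).
have hs1 : d1 <= s1 by have := hdual 0 1 0; rewrite E1 rmorph0 rmorph1 !(mulr0, mul0r, mulr1, addr0, add0r).
have hs2 : d2 <= s2 by have := hdual 0 0 1; rewrite E2 rmorph0 rmorph1 !(mulr0, mul0r, mulr1, addr0, add0r).
have hd0 : 0 <= d0 by rewrite -E0.
have hd1 : 0 <= d1 by rewrite -E1.
have hd2 : 0 <= d2 by rewrite -E2.
have hs : 0 <= q - 1.
  have -> : q - 1 = (s0 - d0) + (s1 - d1) + (s2 - d2) by rewrite -hsum -htr'; ring.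
  by apply: addr_ge0; [apply: addr_ge0|]; rewrite subr_ge0.
have hS0 : 0 <= s0 := le_trans hd0 hs0.
have hS1 : 0 <= s1 := le_trans hd1 hs1.
have hS2 : 0 <= s2 := le_trans hd2 hs2.
have uvE : forall (v : 'cV[R[i]]_3), (adj v *m rho *m v) 0 0 = Qf d0 d1 d2 A B Cc (v 0 0) (v 1 0) (v 2 0).
  by move=> v; rewrite qfE.
have hnz : forall s' : R[i], 0 <= s' -> 1 + s' != 0.
  by move=> s' h; rewrite gt_eqF //; apply: lt_le_trans ltr01 _; rewrite lerDl.
exists (q / 3%:R), (q - 1).
split; last split; last by rewrite addrC subrK.
- split.
    exists (diag_mx (row3 u0 u1 u2)); split.
      split; first exact: diag_mx_is_diag.
      by apply/unitary_diag; case: (row3E u0 u1 u2) => -> -> ->.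
    by rewrite fidE //; case: (row3E u0 u1 u2) => -> -> ->; rewrite mulrC.
  move=> U [/diag_mxP [e ->] /unitary_diag [he0 he1 he2]].
  rewrite fidE // [q / _]mulrC ler_wpM2l ?invr_ge0 ?ler0n //.
  exact: hopt.
split.
  split; first exact: hs.
  have row3c : forall a b c : R[i], map_mx Num.conj (row3 a b c) = row3 a^* b^* c^*.
    by move=> a b c; apply/matrixP => i j; rewrite !mxE; case: ifP => _ //; case: ifP.
  have es : forall (a b c : R[i]) (i : 'I_3), 0 <= a -> 0 <= b -> 0 <= c -> 0 <= row3 a b c 0 i.
    by move=> a b c i ha hb hc; rewrite !mxE; case: ifP => _ //; case: ifP.
  have hq : 0 <= q by apply: le_trans ler01 _; rewrite -subr_ge0.
  have [hz|hnz0] := eqVneq (q - 1) 0.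
    exists rho; split; first by split.
    rewrite hz scale0r !addr0 invr1 scale1r; split; first by split.
    have hsplit : (s0 - d0) + (s1 - d1) + (s2 - d2) = 0 by rewrite -hz -hsum -htr'; ring.
    have g0 : 0 <= s0 - d0 by rewrite subr_ge0.
    have g1 : 0 <= s1 - d1 by rewrite subr_ge0.
    have g2 : 0 <= s2 - d2 by rewrite subr_ge0.
    move/eqP: hsplit; rewrite (paddr_eq0 (addr_ge0 g0 g1) g2) => /andP [].
    rewrite (paddr_eq0 g0 g1) => /andP [].
    rewrite !subr_eq0 => /eqP es0 /eqP es1 /eqP es2.
    have zf : forall a X : R[i], a + X + X <= a -> 0 <= X -> X = 0.
      move=> a X h hX; apply/le_anti; rewrite hX andbT.
      apply: le_trans (_ : X <= X + X) _; first by rewrite lerDl.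
      by rewrite -(lerD2l a) addr0 addrA.
    have hA : A = 0.
      apply/eqP; rewrite -mul_conjC_eq0; apply/eqP; apply: (zf (d0 + d1 * (A * A^*))); last exact: mul_conjC_ge0.
      have := hdual 1 A^* 0.
      have -> : Qf d0 d1 d2 A B Cc 1 A^* 0 = d0 + d1 * (A * A^*) + A * A^* + A * A^*.
        by rewrite /Qf !(rmorph0, rmorph1) conjCK; ring.
      by rewrite es0 es1 !(rmorph0, rmorph1) conjCK !(mulr0, mulr1, addr0).
    have hB : B = 0.
      apply/eqP; rewrite -mul_conjC_eq0; apply/eqP; apply: (zf (d0 + d2 * (B * B^*))); last exact: mul_conjC_ge0.
      have := hdual 1 0 B^*.
      have -> : Qf d0 d1 d2 A B Cc 1 0 B^* = d0 + d2 * (B * B^*) + B * B^* + B * B^*.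
        by rewrite /Qf !(rmorph0, rmorph1) conjCK; ring.
      by rewrite es0 es2 !(rmorph0, rmorph1) conjCK !(mulr0, mul0r, mulr1, addr0, add0r).
    have hC : Cc = 0.
      apply/eqP; rewrite -mul_conjC_eq0; apply/eqP; apply: (zf (d1 + d2 * (Cc * Cc^*))); last exact: mul_conjC_ge0.
      have := hdual 0 1 Cc^*.
      have -> : Qf d0 d1 d2 A B Cc 0 1 Cc^* = d1 + d2 * (Cc * Cc^*) + Cc * Cc^* + Cc * Cc^*.
        by rewrite /Qf !(rmorph0, rmorph1) conjCK; ring.
      by rewrite es1 es2 !(rmorph0, rmorph1) conjCK !(mulr0, mul0r, mulr1, addr0, add0r).
    apply/is_diag_mxP => i j.
    case: (ord3 i) => [->|[->|->]]; case: (ord3 j) => [->|[->|->]] //= _.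
    - by rewrite (hM 0 1) -/A hA rmorph0.
    - by rewrite (hM 0 2) -/B hB rmorph0.
    - by rewrite (hM 1 2) -/Cc hC rmorph0.
  pose D := diag_mx (row3 s0 s1 s2).
  exists ((q - 1)^-1 *: (D - rho)); split.
    split; [|split].
    - rewrite adjZ adjD adjN adj_diag hadj row3c !geC0_conj ?invr_ge0 //.
    - move=> v; rewrite formZ formD formN diag_qf uvE.
      case: (row3E s0 s1 s2) => -> -> ->.
      by rewrite mulr_ge0 ?invr_ge0 // subr_ge0.
    - rewrite mxtraceZ mxtraceD raddfN /= mxtrace_diag sum3 htr.
      by case: (row3E s0 s1 s2) => -> -> ->; rewrite hsum mulVf.
  rewrite scalerA mulfV // scale1r addrC subrK [rho + _]addrC subrK scale_diag; split; last exact: diag_mx_is_diag.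
  apply: density_diag.
    by move=> i; rewrite mxE mulr_ge0 ?invr_ge0 ?es.
  rewrite !mxE /= -!mulrDr hsum mulVf //.
  by rewrite gt_eqF //; apply: lt_le_trans ltr01 _; rewrite -subr_ge0.
move=> s' [hs' [tau [[tadj [tpsd ttr]] [[Yadj [Ypsd Ytr]] Ydiag]]]].
move: Ydiag Yadj Ypsd Ytr; set Y := (1 + s')^-1 *: (rho + s' *: tau).
move=> /diag_mxP [e he] _ _ Ytr.
have hY : rho + s' *: tau = (1 + s') *: Y by rewrite /Y scalerA mulfV ?hnz // scale1r.
have h1 := uvE (vec3 u0 u1 u2).
case: (vec3E u0 u1 u2) h1 => -> -> -> h1.
have h2 := tpsd (vec3 u0 u1 u2).
have h3 := formD rho (s' *: tau) (vec3 u0 u1 u2).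
rewrite formZ hY formZ he diag_qf h1 in h3.
case: (vec3E u0 u1 u2) h3 => -> -> -> h3.
have ucz : forall z : R[i], unitc z -> z^* * z = 1 by move=> z; rewrite /unitc mulrC.
rewrite !ucz // !mulr1 in h3.
move: Ytr; rewrite he mxtrace_diag sum3 => Ytr.
rewrite Ytr mulr1 in h3.
rewrite lerBlDr addrC h3 lerDl.
exact: mulr_ge0.
Qed.
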